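(* Let $\mu$ be a Borel probability measure on a $d$-dimensional real Hilbert space $V$ with compact support $\Omega$, let $\eta>0$, and let $f$ be a function with $\mu(B_{\eta/2}(X))\ge \exp(-f(2/\eta,d))$ for every $X\in\Omega$. Let $A$ be in the $\eta$-interior of $\mathrm{hull}(\Omega)$. Then any $Y^\star\in V_{\mathcal L}$ minimizing $F_A$ over $V_{\mathcal L}$ satisfies $\|Y^\star\|\le 2\eta^{-1} f(2\eta^{-1},d)$. In particular, if $\mu$ is balanced (so $f$ is a polynomial), then $\|Y^\star\|\le \mathrm{poly}(\eta^{-1},d)$.
   Context: $B_r(X)$ is the open ball of radius $r$ about $X$. $F_A(Y)=\langle Y,A\rangle+\log\int_\Omega e^{-\langle Y,X\rangle}d\mu(X)$. $V_{\mathcal L}$ is the linear subspace parallel to the affine hull $\mathrm{aff}(\Omega)$. $A$ is in the $\eta$-interior of $\mathrm{hull}(\Omega)$ if $B_\eta(A)\cap \mathrm{aff}(\Omega)\subseteq \mathrm{hull}(\Omega)$. $\mu$ is balanced if there is a polynomial $f$ such that for all $\delta>0$ and $X\in\Omega$, $\mu(B_\delta(X))\ge \exp(-f(\delta^{-1},d))$. *)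

(* Defs.v *)
From HB Require Import structures.
From mathcomp Require Import all_boot all_order all_algebra.
From mathcomp Require Import all_classical all_reals all_analysis.
Set Implicit Arguments. Unset Strict Implicit. Unset Printing Implicit Defensive.
Import Order.TTheory GRing.Theory Num.Theory.
Import numFieldNormedType.Exports.
Local Open Scope classical_set_scope.
Local Open Scope ring_scope.

Section Defs.
Variables (R : realType) (d : nat).

(* The d-dimensional real Hilbert space V is modelled as 'rV[R]_d with the
   standard (Euclidean) inner product. *)
Definition dotp (x y : 'rV[R]_d) : R := \sum_(i < d) x ord0 i * y ord0 i.
Definition enorm (x : 'rV[R]_d) : R := Num.sqrt (dotp x x).

Definition eball (X : 'rV[R]_d) (r : R) : set 'rV[R]_d :=
  [set Z | enorm (Z - X) < r].

Definition openV : set (set 'rV[R]_d) := [set A | open A].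
Definition borelV := g_sigma_algebraType openV.

(* support of a measure: points all of whose open neighbourhoods have
   positive measure (the smallest closed set of full measure) *)
Definition msupp (mu : set borelV -> \bar R) : set 'rV[R]_d :=
  [set X | forall r : R, 0 < r -> (0 < mu (eball X r))%E].

Definition hull (S : set 'rV[R]_d) : set 'rV[R]_d :=
  [set A | exists n (x : 'I_n -> 'rV[R]_d) (l : 'I_n -> R),
     (forall i, S (x i)) /\ (forall i, 0 <= l i) /\ \sum_(i < n) l i = 1 /\
     A = \sum_(i < n) l i *: x i].

Definition aff (S : set 'rV[R]_d) : set 'rV[R]_d :=
  [set A | exists n (x : 'I_n -> 'rV[R]_d) (l : 'I_n -> R),
     (forall i, S (x i)) /\ \sum_(i < n) l i = 1 /\
     A = \sum_(i < n) l i *: x i].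

Definition VL (S : set 'rV[R]_d) : set 'rV[R]_d :=
  [set Y | exists a b, aff S a /\ aff S b /\ Y = a - b].

Definition eta_interior (eta : R) (S : set 'rV[R]_d) (A : 'rV[R]_d) : Prop :=
  hull S A /\ (eball A eta `&` aff S `<=` hull S).

Definition FA (mu : set borelV -> \bar R) (Omega : set 'rV[R]_d)
  (A Y : 'rV[R]_d) : R :=
  dotp Y A + ln (fine (\int[mu]_(X in (Omega : set borelV))
                          (expR (- dotp Y X))%:E)).

End Defs.

(* Main.v *)
Require Import Defs.
From HB Require Import structures.
From mathcomp Require Import all_boot all_order all_algebra.
From mathcomp Require Import all_classical all_reals all_analysis.
From mathcomp Require Import lra ring.
Import Order.TTheory GRing.Theory Num.Theory.
Import numFieldNormedType.Exports.
Local Open Scope classical_set_scope.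
Local Open Scope ring_scope.
Section S.
Variables (R : realType) (d : nat).
Implicit Types (x y z : 'rV[R]_d).

Lemma dotpC x y : dotp x y = dotp y x.
Proof. by apply: eq_bigr => i _; rewrite mulrC. Qed.
Lemma dotpDr x y z : dotp x (y + z) = dotp x y + dotp x z.
Proof. by rewrite /dotp -big_split; apply: eq_bigr => i _; rewrite mxE mulrDr. Qed.
Lemma dotpZr x y (a : R) : dotp x (a *: y) = a * dotp x y.
Proof. by rewrite /dotp mulr_sumr; apply: eq_bigr => i _; rewrite mxE mulrCA. Qed.
Lemma dotpNr x y : dotp x (- y) = - dotp x y.
Proof. by rewrite -scaleN1r dotpZr mulN1r. Qed.
Lemma dotpBr x y z : dotp x (y - z) = dotp x y - dotp x z.
Proof. by rewrite dotpDr dotpNr. Qed.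
Lemma dotpDl x y z : dotp (y + z) x = dotp y x + dotp z x.
Proof. by rewrite dotpC dotpDr !(dotpC x). Qed.
Lemma dotpZl x y (a : R) : dotp (a *: y) x = a * dotp y x.
Proof. by rewrite dotpC dotpZr dotpC. Qed.
Lemma dotpNl x y : dotp (- y) x = - dotp y x.
Proof. by rewrite dotpC dotpNr dotpC. Qed.
Lemma dotpBl x y z : dotp (y - z) x = dotp y x - dotp z x.
Proof. by rewrite dotpDl dotpNl. Qed.
Lemma dotp0r x : dotp x 0 = 0.
Proof. by rewrite -(scale0r 0) dotpZr mul0r. Qed.
Lemma dotp_sumr n x (l : 'I_n -> R) (y : 'I_n -> 'rV[R]_d) :
  dotp x (\sum_(i < n) l i *: y i) = \sum_(i < n) l i * dotp x (y i).
Proof.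
elim: n l y => [|n IH] l y; first by rewrite !big_ord0 dotp0r.
by rewrite !big_ord_recr /= dotpDr IH dotpZr.
Qed.
Lemma dotp_ge0 x : 0 <= dotp x x.
Proof. by apply: sumr_ge0 => i _; rewrite -expr2 sqr_ge0. Qed.
Lemma dotp_eq0 x : dotp x x = 0 -> x = 0.
Proof.
move=> /eqP; rewrite psumr_eq0; last by move=> i _; rewrite -expr2 sqr_ge0.
move=> /allP H; apply/matrixP => i j; rewrite mxE (ord1 i).
by have := H j (mem_index_enum j); rewrite -expr2 sqrf_eq0 => /eqP.
Qed.
Lemma enorm_ge0 x : 0 <= enorm x.
Proof. exact: sqrtr_ge0. Qed.
Lemma enorm_sq x : enorm x ^+ 2 = dotp x x.
Proof. by rewrite sqr_sqrtr // dotp_ge0. Qed.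
Lemma enorm0 : enorm (0 : 'rV[R]_d) = 0.
Proof. by rewrite /enorm dotp0r sqrtr0. Qed.
Lemma enorm_eq0 x : enorm x = 0 -> x = 0.
Proof. by move=> h; apply: dotp_eq0; rewrite -enorm_sq h expr0n. Qed.
Lemma enormN x : enorm (- x) = enorm x.
Proof. by rewrite /enorm dotpNl dotpNr opprK. Qed.
Lemma enormZ (a : R) x : enorm (a *: x) = `|a| * enorm x.
Proof. by rewrite /enorm dotpZl dotpZr mulrA -expr2 sqrtrM ?sqr_ge0 // sqrtr_sqr. Qed.

Lemma CS x y : dotp x y <= enorm x * enorm y.
Proof.
set a := enorm x; set b := enorm y.
have [a0|a0] := eqVneq a 0.
  by rewrite (enorm_eq0 _ a0) dotpC dotp0r a0 mul0r.
have [b0|b0] := eqVneq b 0.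
  by rewrite (enorm_eq0 _ b0) dotp0r b0 mulr0.
have ha : 0 < a by rewrite lt_neqAle eq_sym a0 enorm_ge0.
have hb : 0 < b by rewrite lt_neqAle eq_sym b0 enorm_ge0.
have := dotp_ge0 (b *: x - a *: y).
rewrite !(dotpBl, dotpBr, dotpZl, dotpZr) -!enorm_sq -/a -/b (dotpC y x) => h.
have hab : 0 < a * b by rewrite mulr_gt0.
rewrite -(ler_pM2l hab); nra.
Qed.
Lemma CSN x y : - (enorm x * enorm y) <= dotp x y.
Proof. by rewrite lerNl -dotpNl -(enormN x) CS. Qed.
Lemma CSabs x y : `|dotp x y| <= enorm x * enorm y.
Proof. by rewrite ler_norml CS CSN. Qed.

Lemma enormD x y : enorm (x + y) <= enorm x + enorm y.
Proof.
rewrite -(ler_pXn2r (_ : 0 < 2)%N) ?nnegrE ?addr_ge0 ?enorm_ge0 //.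
rewrite enorm_sq !(dotpDl, dotpDr) (dotpC y x) -!enorm_sq.
have := CS x y; nra.
Qed.
Lemma enorm_tri x y z : enorm (x - z) <= enorm (x - y) + enorm (y - z).
Proof.
have -> : x - z = (x - y) + (y - z) by rewrite addrA subrK.
exact: enormD. Qed.

Lemma enorm_coord x e : 0 <= e -> (forall i, `|x ord0 i| <= e) ->
  enorm x <= d.+1%:R * e.
Proof.
move=> e0 H.
rewrite -(ler_pXn2r (_ : 0 < 2)%N) ?nnegrE ?mulr_ge0 ?enorm_ge0 //.
rewrite enorm_sq; apply: (@le_trans _ _ (\sum_(i < d) e ^+ 2)).
  apply: ler_sum => i _; rewrite -expr2 -real_normK ?num_real //.
  by rewrite lerXn2r ?nnegrE ?normr_ge0.
rewrite sumr_const card_ord -mulr_natl exprMn.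
have hd : (d%:R : R) <= d.+1%:R ^+ 2.
  rewrite -natrX ler_nat; apply: (@leq_trans d.+1) => //.
  by rewrite expnS leq_pmulr.
rewrite mulr1 -mulr_natl; have := sqr_ge0 e; nra.
Qed.

Lemma coord_le_norm x i : `|x ord0 i| <= `|x|.
Proof.
have -> : `|x| = mx_norm x by [].
rewrite mx_normrE; apply/bigmax_geP; right => /=.
by exists (ord0, i).
Qed.

Lemma enorm_le_norm x : enorm x <= d.+1%:R * `|x|.
Proof. by apply: enorm_coord => //; exact: coord_le_norm. Qed.

Lemma open_eball (X : 'rV[R]_d) (r : R) : open (eball X r).
Proof.
rewrite openE => z /= hz; apply/nbhs_ballP.
set e := (r - enorm (z - X)) / d.+1%:R.
have e0 : 0 < e by rewrite divr_gt0 // subr_gt0.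
exists e => // w; rewrite -ball_normE /= => hw.
rewrite /eball /=.
apply: le_lt_trans (enorm_tri _ z _) _.
rewrite -enormN opprB.
apply: (@le_lt_trans _ _ (d.+1%:R * `|z - w| + enorm (z - X))).
  by rewrite lerD2r enorm_le_norm.
rewrite -ltrBrDr -ltr_pdivlMl //; by rewrite mulrC.
Qed.


Lemma lip_cont (g : 'rV[R]_d -> R) (K : R) : 0 <= K ->
  (forall x y, `|g x - g y| <= K * `|x - y|) -> continuous g.
Proof.
move=> K0 H x; apply/(@cvgrPdist_lt _ _ _ _ (nbhs_filter x)) => e e0.
apply/nbhs_ballP; exists (e / (K + 1)).

  by rewrite /= divr_gt0 // ltr_wpDl.
move=> t; rewrite -ball_normE /= => ht.
apply: le_lt_trans (H x t) _.
have K1 : 0 < K + 1 by rewrite ltr_wpDl.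
apply: (@le_lt_trans _ _ ((K + 1) * `|x - t|)).
  by rewrite ler_wpM2r // lerDl.
by rewrite mulrC -ltr_pdivlMr.
Qed.

Lemma cont_dotp Y : continuous (fun X : 'rV[R]_d => dotp Y X).
Proof.
apply: (@lip_cont _ (enorm Y * d.+1%:R)).
  by rewrite mulr_ge0 ?enorm_ge0.
move=> x y; rewrite -dotpBr; apply: le_trans (CSabs _ _) _.
by rewrite -mulrA ler_wpM2l ?enorm_ge0 // enorm_le_norm.
Qed.

Lemma cont_expdotp Y : continuous (fun X : 'rV[R]_d => expR (- dotp Y X)).
Proof.
have -> : (fun X : 'rV[R]_d => expR (- dotp Y X)) = expR \o (fun X => dotp (- Y) X).
  by apply: funext => X /=; rewrite dotpNl.
move=> x; apply: continuous_comp; first exact: cont_dotp.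
exact: continuous_expR.
Qed.

Lemma meas_open (A : set (borelV R d)) : open (A : set 'rV[R]_d) -> measurable A.
Proof. by move=> oA; apply: sub_sigma_algebra. Qed.

Lemma meas_eball (X : 'rV[R]_d) (r : R) : measurable (eball X r : set (borelV R d)).
Proof. apply: meas_open; exact: open_eball. Qed.

Lemma cont_meas (g : 'rV[R]_d -> R) (D : set (borelV R d)) :
  continuous g -> measurable D -> measurable_fun D (g : borelV R d -> R).
Proof.
move=> cg mD; apply: (measurability _ (measurable_realfun.RGenOpens.measurableE R)).
move=> _ [_ [a [b ->] <-]]; apply: measurableI => //.
apply: meas_open; apply: open_comp; last exact: interval_open.
by move=> x _; exact: cg.
Qed.


Lemma hull_aff (S : set 'rV[R]_d) : hull S `<=` aff S.
Proof. by move=> z [n [x [l [Sx [_ [l1 ->]]]]]]; exists n, x, l. Qed.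

Lemma aff2 (S : set 'rV[R]_d) p q (a b : R) : a + b = 1 ->
  aff S p -> aff S q -> aff S (a *: p + b *: q).
Proof.
move=> ab [n1 [x [l [Sx [l1 ->]]]]] [n2 [y [m [Sy [m1 ->]]]]].
exists (n1 + n2)%N, (fun k => match fintype.split k with inl i => x i | inr j => y j end),
  (fun k => match fintype.split k with inl i => a * l i | inr j => b * m j end).
split; first by move=> k; case: (fintype.split k).
have hl (i : 'I_n1) : fintype.split (lshift n2 i) = inl i := unsplitK (inl _ i).
have hr (j : 'I_n2) : fintype.split (rshift n1 j) = inr j := unsplitK (inr _ j).
rewrite !big_split_ord /=.
under eq_bigr => i _ do rewrite hl.
under [X in _ + X = _]eq_bigr => i _ do rewrite hr.
under [X in _ = X + _]eq_bigr => i _ do rewrite hl.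
under [X in _ = _ + X]eq_bigr => i _ do rewrite hr.
rewrite -!mulr_sumr l1 m1 !mulr1; split => //.
by rewrite !scaler_sumr; congr (_ + _); apply: eq_bigr => i _; rewrite scalerA.
Qed.

Lemma aff_move (S : set 'rV[R]_d) p q r (s : R) :
  aff S p -> aff S q -> aff S r -> aff S (p + s *: (q - r)).
Proof.
move=> hp hq hr.
have h22 : (2 : R)^-1 + 2^-1 = 1 by field.
have hm : aff S (2^-1 *: p + 2^-1 *: q) := (@aff2 S p q (2^-1) (2^-1) h22 hp hq).
have hm2 : aff S (2 *: (2^-1 *: p + 2^-1 *: q) + (-1) *: r).
  have h21 : (2 : R) + -1 = 1 by field.
  exact: (@aff2 S _ r 2 (-1) h21 hm hr).
have -> : p + s *: (q - r) =
   (1 - s) *: p + s *: (2 *: (2^-1 *: p + 2^-1 *: q) + (-1) *: r).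
  by apply/matrixP => i j; rewrite !mxE; field.
have h1 : 1 - s + s = 1 by field.
exact: (@aff2 S p _ (1 - s) s h1 hp hm2).
Qed.

Lemma hull_min (S : set 'rV[R]_d) Z Y : hull S Z ->
  exists x, S x /\ dotp Y x <= dotp Y Z.
Proof.
case=> [n [x [l [Sx [l0 [l1 ->]]]]]].
case: n x l Sx l0 l1 => [|n] x l Sx l0 l1.
  by move: l1; rewrite big_ord0 => /eqP; rewrite eq_sym oner_eq0.
case: (@arg_minP _ _ _ ord0 xpredT (fun i => dotp Y (x i)) isT) => i0 _ hmin.
exists (x i0); split => //.
rewrite dotp_sumr; apply: (@le_trans _ _ (\sum_i l i * dotp Y (x i0))).
  by rewrite -mulr_suml l1 mul1r.
by apply: ler_sum => i _; rewrite ler_wpM2l //; exact: hmin.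
Qed.

End S.

Section Supp.
Variables (R : realType) (d : nat) (mu : probability (borelV R d) R).
Local Notation T := (borelV R d).

Definition ballQ (qs : 'rV[rat]_d * rat) : set 'rV[R]_d :=
  eball (map_mx ratr qs.1) (ratr qs.2).

Definition Fq (n : nat) : set T :=
  match unpickle n with
  | Some qs => if pselect (mu (ballQ qs) = 0%E) then ballQ qs else set0
  | None => set0
  end.

Lemma Fq_meas n : measurable (Fq n).
Proof.
rewrite /Fq; case: (unpickle n) => [qs|] //.
by case: pselect => h //=; rewrite /ballQ; exact: meas_eball.
Qed.

Lemma Fq_null n : mu (Fq n) = 0%E.
Proof.
rewrite /Fq; case: (unpickle n) => [qs|]; last exact: measure0.
by case: pselect => h //=; exact: measure0.
Qed.

Lemma eball_sub (c X : 'rV[R]_d) (r' r : R) : enorm (c - X) + r' <= r ->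
  eball c r' `<=` eball X r.
Proof.
move=> h w; rewrite /eball /= => hw.
apply: le_lt_trans (@enorm_tri _ _ _ c _) _.
apply: lt_le_trans h; by rewrite addrC ltrD2l.
Qed.

Lemma eball_null (X : 'rV[R]_d) r (B : set 'rV[R]_d) :
  measurable (B : set T) -> eball X r `<=` B -> mu (B : set T) = 0%E ->
  mu (eball X r : set T) = 0%E.
Proof.
move=> mB sub h; apply/eqP; rewrite eq_le measure_ge0 andbT -h.
by apply: le_measure => //; rewrite inE //; exact: meas_eball.
Qed.

Lemma compl_sub : ~` (msupp mu : set T) `<=` \bigcup_n Fq n.
Proof.
move=> x hx.
have [r [r0 hr]] : exists r, 0 < r /\ mu (eball x r : set T) = 0%E.
  apply: contrapT => H; apply: hx => r r0; rewrite lt0e measure_ge0 andbT.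
  apply/negP => /eqP h; apply: H; by exists r.
set de := r / (3 * d.+1%:R).
have de0 : 0 < de by rewrite divr_gt0 // mulr_gt0.
have /fin_all_exists [f hf] : forall i : 'I_d, exists q : rat,
    ratr q \in `](x ord0 i - de), (x ord0 i + de)[.
  move=> i; apply: rat_in_itvoo; rewrite ltrBlDr -addrA ltrDl; exact: addr_gt0.
have [s hs] : exists s : rat, ratr s \in `](r / 3), (2 * r / 3)[.
  apply: rat_in_itvoo; lra.
set q : 'rV[rat]_d := \row_i f i.
have hq : enorm (map_mx ratr q - x) <= r / 3.
  apply: le_trans (@enorm_coord _ _ _ _ (ltW de0) _) _.
    move=> i; rewrite !mxE; have := hf i; rewrite in_itv /= => /andP[h1 h2].
    by rewrite ler_norml; apply/andP; split; lra.
  rewrite /de le_eqVlt; apply/orP; left; apply/eqP; field.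
  by rewrite addrC natr1 pnatr_eq0.
move: hs; rewrite in_itv /= => /andP[s1 s2].
exists (pickle (q, s)) => //.
rewrite /Fq pickleK; case: pselect => hnull.
  rewrite /ballQ /eball /= -enormN opprB; exact: le_lt_trans hq s1.
apply: hnull; apply: (@eball_null (map_mx ratr q) (ratr s) (eball x r)) => //;
  first exact: meas_eball.
apply: eball_sub => /=.
apply: (@le_trans _ _ (r / 3 + 2 * r / 3)); first by rewrite lerD // ltW.
by rewrite -mulrDl; nra.
Qed.

Lemma sub_compl : \bigcup_n Fq n `<=` ~` (msupp mu : set T).
Proof.
move=> x [n _]; rewrite /Fq; case: (unpickle n) => [qs|] //.
case: pselect => //= hnull hx Hx.
have hx' : enorm (x - map_mx ratr qs.1) < ratr qs.2 by exact: hx.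
have r0 : 0 < ratr qs.2 - enorm (x - map_mx ratr qs.1) by rewrite subr_gt0.
have := Hx _ r0.
rewrite (@eball_null x _ (ballQ qs)) ?ltxx //; first exact: meas_eball.
apply: eball_sub; by rewrite addrC subrK.
Qed.

Lemma supp_eq : (msupp mu : set T) = ~` \bigcup_n Fq n.
Proof.
apply/seteqP; split.
  by move=> x hx hU; exact: (@sub_compl x hU hx).
move=> x hx; apply: contrapT => hn; apply: hx; exact: compl_sub.
Qed.

Lemma supp_meas : measurable (msupp mu : set T).
Proof.
rewrite supp_eq; apply: measurableC; apply: bigcupT_measurable => n.
exact: Fq_meas.
Qed.

Lemma supp_full : mu (~` (msupp mu : set T)) = 0%E.
Proof.
apply/eqP; rewrite eq_le measure_ge0 andbT.
rewrite supp_eq setCK.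
apply: le_trans (measure_sigma_subadditive _ _ _ _) _.
- exact: Fq_meas.
- by apply: bigcupT_measurable => n; exact: Fq_meas.
- by [].
by rewrite eseries0 // => i _ _; exact: Fq_null.
Qed.

End Supp.

From mathcomp Require Import measurable_realfun.

Lemma fine_le1 (R : realType) (e : \bar R) : (e <= 1)%E -> fine e <= 1.
Proof. by case: e => [r| |] //=; rewrite lee_fin. Qed.

Theorem mainTheorem4 (R : realType) (d : nat)
  (mu : probability (borelV R d) R) (eta : R) (f : R -> R -> R)
  (A Ystar : 'rV[R]_d) :
  compact (msupp mu) ->
  0 < eta ->
  (forall X, msupp mu X ->
     (expR (- f (2 / eta) d%:R))%:E <= mu (eball X (eta / 2)))%E ->
  eta_interior eta (msupp mu) A ->
  VL (msupp mu) Ystar ->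
  (forall Y, VL (msupp mu) Y ->
     FA mu (msupp mu) A Ystar <= FA mu (msupp mu) A Y) ->
  enorm Ystar <= 2 / eta * f (2 / eta) d%:R.
Proof.
move=> cpt eta0 hball [hA hint] hY hmin.
set F := f (2 / eta) d%:R.
set Om := msupp mu.
have mOm : measurable (Om : set (borelV R d)) := supp_meas _ _ mu.
have [x0 [Ox0 _]] := hull_min _ _ _ _ 0 hA.
have F0 : 0 <= F.
  have := hball _ Ox0.
  have := probability_le1 mu (meas_eball _ _ x0 (eta / 2)).
  move=> h1 h2; have := le_trans h2 h1; rewrite lee_fin expR_le1.
  by rewrite lerNl oppr0.
set n := enorm Ystar.
have [n0|n0] := eqVneq n 0.
  by rewrite n0 mulr_ge0 // divr_ge0 // ltW.
have npos : 0 < n by rewrite lt_neqAle eq_sym n0 enorm_ge0.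
have up : FA mu Om A Ystar <= 0.
  apply: le_trans (hmin 0 _) _.
    have aA : aff Om A := hull_aff _ _ _ _ hA.
    by exists A, A; split; [|split]; rewrite ?subrr.
  rewrite /FA dotpC dotp0r add0r.
  under eq_integral do rewrite dotpC dotp0r oppr0 expR0.
  rewrite integral_cst // mul1e; apply: ln_le0; apply: fine_le1.
  exact: probability_le1.
have aA : aff Om A := hull_aff _ _ _ _ hA.
have [M hM] : exists M, forall x, Om x -> `|x| <= M.
  have := compact_bounded cpt; case => M [_ hM]; exists (M + 1) => x hx.
  by apply: (hM (M + 1)) => //; rewrite ltrDl.
have mg : measurable_fun (Om : set (borelV R d))
    (EFin \o (fun X : borelV R d => expR (- dotp Ystar X))).
  by apply/measurable_EFinP; exact: (cont_meas _ _ _ _ (cont_expdotp _ _ Ystar) mOm).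
set I := (\int[mu]_(X in (Om : set (borelV R d))) (expR (- dotp Ystar X))%:E)%E.
have I0 : (0 <= I)%E by apply: integral_ge0 => X _; rewrite lee_fin expR_ge0.
set K := n * (d.+1%:R * M).
have Ifin : I \is a fin_num.
  rewrite ge0_fin_numE //.
  have h : (I <= \int[mu]_(X in (Om : set (borelV R d))) (cst (expR K)%:E X))%E.
    apply: ge0_le_integral => //.
    move=> X hX /=; rewrite lee_fin ler_expR /K.
    apply: le_trans (_ : `|dotp Ystar X| <= _).
      by rewrite -normrN ler_norm.
    apply: le_trans (CSabs _ _ _ _) _; rewrite ler_wpM2l ?enorm_ge0 //.
    apply: le_trans (enorm_le_norm _ _ _) _.
    by rewrite ler_wpM2l // hM.
  apply: le_lt_trans h _.
  rewrite integral_cst //; apply: lte_mul_pinfty => //.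
  by apply: le_lt_trans (probability_le1 _ mOm) _; exact: ltry.
have low : forall t, 0 <= t -> t < eta ->
    t * n - n * (eta / 2) - F <= FA mu Om A Ystar.
  move=> t t0 teta.
  case: hY => [a [b [aa [ab hYab]]]].
  set Z := A + (- (t / n)) *: (a - b).
  have aZ : aff Om Z := aff_move _ _ _ _ _ _ (- (t / n)) aA aa ab.
  have hZ : enorm (Z - A) = t.
    rewrite /Z addrC addKr -hYab enormZ normrN ger0_norm; last first.
      by rewrite divr_ge0 // enorm_ge0.
    by rewrite -/n mulfVK.
  have hZh : hull Om Z by apply: hint; split => //; rewrite /eball /= hZ.
  have [x [Ox hx]] := hull_min _ _ _ _ Ystar hZh.
  have hYZ : dotp Ystar Z = dotp Ystar A - t * n.
    rewrite /Z dotpDr dotpZr -hYab -enorm_sq -/n; congr (_ + _).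
    by rewrite expr2 mulNr mulrA mulfVK.
  set B := eball x (eta / 2).
  set c := - dotp Ystar A + t * n - n * (eta / 2).
  have hB : forall X, B X -> c <= - dotp Ystar X.
    move=> X hX.
    have : dotp Ystar (X - x) <= n * (eta / 2).
      apply: le_trans (CS _ _ _ _) _; rewrite ler_wpM2l ?enorm_ge0 //.
      exact: ltW.
    rewrite dotpBr /c; lra.
  have mB : measurable (B : set (borelV R d)) := meas_eball _ _ x (eta / 2).
  have mOB : measurable ((Om `&` B) : set (borelV R d)) by exact: measurableI.
  have muB : (mu (B : set (borelV R d)) <= mu ((Om `&` B) : set (borelV R d)))%E.
    have mC : measurable (~` (Om : set (borelV R d))) by exact: measurableC.
    apply: (@le_trans _ _ (mu ((Om `&` B) `|` ~` Om : set (borelV R d)))).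
      apply: le_measure; rewrite ?inE //; first exact: measurableU.
      move=> y By; have [Oy|Oy] := pselect (Om y); [left|right] => //.
    apply: le_trans (measureU2 _ _ _) _ => //.
    have := supp_full _ _ mu; rewrite -/Om => h0.
    rewrite -[leRHS]adde0; apply: leeD => //.
    by rewrite le_eqVlt; apply/orP; left; apply/eqP; exact: h0.
  have Ilow : ((expR c)%:E * mu (B : set (borelV R d)) <= I)%E.
    apply: (@le_trans _ _ (\int[mu]_(X in ((Om `&` B) : set (borelV R d))) (cst (expR c)%:E X))%E).
      by rewrite integral_cst // lee_pmul2l ?lte_fin ?expR_gt0.
    apply: (@le_trans _ _ (\int[mu]_(X in ((Om `&` B) : set (borelV R d))) (expR (- dotp Ystar X))%:E)%E).
      apply: ge0_le_integral => //.
        by move=> X _; rewrite /= lee_fin expR_ge0.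
        exact: (measurable_funS mOm (@subIsetl _ _ _) mg).
      by move=> X [_ hX] /=; rewrite lee_fin ler_expR; exact: hB.
    by rewrite /I; apply: (ge0_subset_integral _ mOB mOm) => //.
  have hF := hball x Ox.
  have hI : I = (fine I)%:E by rewrite fineK.
  have rlow : expR (c - F) <= fine I.
    rewrite -lee_fin -hI expRD EFinM.
    refine (le_trans _ Ilow).
    apply: lee_wpmul2l; first by rewrite lee_fin expR_ge0.
    have hF2 : ((expR (- F))%:E <= mu (B : set (borelV R d)))%E by exact: hF.
    exact: hF2.
  have rpos : 0 < fine I by apply: lt_le_trans rlow; exact: expR_gt0.
  have lnlow : c - F <= ln (fine I).
    by rewrite -(expRK (c - F)) ler_ln ?posrE ?expR_gt0.
  rewrite /FA -/I; rewrite /c in lnlow; lra.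
have key : n * (eta / 2) <= F.
  rewrite leNgt; apply/negP => hlt.
  set de := n * (eta / 2) - F.
  have de0 : 0 < de by rewrite /de subr_gt0.
  have hq : 0 < de / (2 * n) by rewrite divr_gt0 // mulr_gt0.
  have hq2 : de / (2 * n) <= eta / 4.
    rewrite ler_pdivrMr ?mulr_gt0 // /de.
    have -> : eta / 4 * (2 * n) = n * (eta / 2) by field.
    by rewrite lerBlDr lerDl.
  have t0 : 0 <= eta - de / (2 * n) by lra.
  have t1 : eta - de / (2 * n) < eta by lra.
  have h := le_trans (low _ t0 t1) up.
  have e1 : (eta - de / (2 * n)) * n = eta * n - de / 2.
    by field; rewrite n0.
  have e2 : eta * n = 2 * (n * (eta / 2)) by field.
  have e3 : de = n * (eta / 2) - F by [].
  rewrite e1 in h; lra.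
have e4 : 2 / eta * (n * (eta / 2)) = n.
  by field; rewrite gt_eqF.
rewrite -{1}e4; apply: ler_wpM2l => //.
by rewrite divr_ge0 // ltW.
Qed.
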